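(* Let $B$ be a path-connected space and $p\colon E\to B$ a disk-hedgehog covering with $E$ a Peano space; let $e_0\in E$, $b_0=p(e_0)$ and $F=p^{-1}(b_0)$. Then the Peano fibered product $q$ of the family of pointed coverings $\{p\colon(E,e)\to(B,b_0)\}_{e\in F}$ (based at $\{e\}_{e\in F}$) is regular.
   Context: All maps are continuous; a Peano space is a connected, locally path-connected space. The Peanification of a space $Y$ is the set $Y$ with the topology whose basis consists of path components of open subsets of $Y$. For a class $\mathcal{P}$ of spaces, $p\colon E\to B$ is a $\mathcal{P}$-covering if for every $e_0\in E$, $X\in\mathcal{P}$, $x_0\in X$ and map $f\colon X\to B$ with $f(x_0)=p(e_0)$ there is a unique map $g\colon X\to E$ with $p\circ g=f$, $g(x_0)=e_0$. A directed wedge is $(Z,z_0)=\bigvee_{s\in S}(Z_s,z_s)$, a wedge of pointed Peano spaces indexed by a directed set $S$, topologized so that $U\subset Z\setminus\{z_0\}$ is open iff each $U\cap Z_s$ is open, and $U\ni z_0$ is an open neighborhood of $z_0$ iff each $U\cap Z_s$ is open and there is $t\in S$ with $Z_s\subset U$ for all $s>t$. A disk-hedgehog is a directed wedge with each $Z_s\cong D^2$; a disk-hedgehog covering is a $\mathcal{P}$-covering for $\mathcal{P}$ the class of all disk-hedgehogs. The Peano fibered product of pointed coverings $\{(p_s,e_s)\}_{s\in S}$ over $B$ is $(p,e)$ where $e=\{e_s\}$, the total space is the Peanification of the path component of $e$ in $\{\{x_s\}\in\prod_sE_s: p_s(x_s)=p_t(x_t)\ \forall s,t\}$, and $p(\{x_s\})=p_t(x_t)$.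 A covering is regular if for every loop $\alpha$ in the base either all its lifts are loops or none are. *)

(* Defs.v *)
From HB Require Import structures.
From mathcomp Require Import all_boot all_order all_algebra.
From mathcomp Require Import all_classical all_reals all_analysis.
From mathcomp Require Import Rstruct Rstruct_topology.
Unset Printing Implicit Defensive.
Import Order.TTheory GRing.Theory Num.Theory.
Local Open Scope classical_set_scope.
Local Open Scope ring_scope.

Notation R := Rdefinitions.R (only parsing).
(* Spaces given by open sets.  A "space" is a carrier set A : set T together *)
(* with a family tau : set (set T) of open sets (all contained in A).        *)
(* A MathComp topologicalType X is the space (setT, topen X).               *)

Definition topen (X : topologicalType) : set (set X) := [set U | open U].

Definition subspace_opens {T : Type} (A : set T) (tau : set (set T)) : set (set T) :=
  [set U | exists V, tau V /\ U = V `&` A].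

Definition cont_on {T S : Type} (A : set T) (tau : set (set T))
    (C : set S) (sigma : set (set S)) (f : T -> S) : Prop :=
  (forall x, A x -> C (f x)) /\ (forall V, sigma V -> tau (A `&` f @^-1` V)).

Definition unit_I : set R := [set t | 0 <= t <= 1].
Definition unit_I_opens : set (set R) := subspace_opens unit_I (topen R).

Definition path_in {T : Type} (A : set T) (tau : set (set T)) (U : set T)
    (g : R -> T) (x y : T) : Prop :=
  [/\ cont_on unit_I unit_I_opens A tau g, (forall t, unit_I t -> U (g t)),
      g 0 = x & g 1 = y].

Definition path_comp {T : Type} (A : set T) (tau : set (set T)) (U : set T)
    (x : T) : set T :=
  [set y | exists g, path_in A tau U g x y].

Definition path_connected_set {T : Type} (A : set T) (tau : set (set T))
    (U : set T) : Prop :=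
  forall x y, U x -> U y -> exists g, path_in A tau U g x y.

Definition locally_path_connected {T : Type} (A : set T) (tau : set (set T)) : Prop :=
  forall U x, tau U -> U x ->
    exists V, [/\ tau V, V x, V `<=` U & path_connected_set A tau V].

Definition peano_space (X : topologicalType) : Prop :=
  connected [set: X] /\ locally_path_connected setT (topen X).

(* Peanification: topology generated by the basis of path components of open
   sets, i.e. W is open iff every x in W lies in a path component of some
   open U (the one of x) contained in W. *)
Definition peanification {T : Type} (A : set T) (tau : set (set T)) : set (set T) :=
  [set W | W `<=` A /\
    forall x, W x -> exists U, [/\ tau U, U x & path_comp A tau U x `<=` W]].

Definition directed_set {S : Type} (le : S -> S -> Prop) : Prop :=
  [/\ inhabited S, (forall s, le s s),
      (forall s t u, le s t -> le t u -> le s u) &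
      (forall s t, exists u, le s u /\ le t u)].

Definition gt_of {S : Type} (le : S -> S -> Prop) (s t : S) : Prop :=
  le t s /\ ~ le s t.

Definition disk : set (R * R) := [set x | x.1 ^+ 2 + x.2 ^+ 2 <= 1].
Definition disk_opens : set (set (R * R)) := subspace_opens disk (topen (R * R)%type).

(* Points of the wedge: None is the wedge point z0, Some (s, x) is the point
   x (<> c s) of the s-th copy of the disk, whose base point is c s. *)
Definition hh_point (S : Type) := option (S * (R * R)).

Definition hh_incl {S : Type} (c : S -> R * R) (s : S) (x : R * R) : hh_point S :=
  if x == c s then None else Some (s, x).

Definition hh_carrier {S : Type} (c : S -> R * R) : set (hh_point S) :=
  [set z | match z with None => True | Some (s, x) => disk x /\ x <> c s end].

Definition hh_opens {S : Type} (le : S -> S -> Prop) (c : S -> R * R)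
    : set (set (hh_point S)) :=
  [set U | [/\ U `<=` hh_carrier c,
    (forall s, disk_opens (disk `&` hh_incl c s @^-1` U)) &
    (U None -> exists t, forall s, gt_of le s t ->
                 forall x, disk x -> U (hh_incl c s x))]].

Definition disk_hedgehog_covering {E B : topologicalType} (p : E -> B) : Prop :=
  continuous p /\
  forall (e0 : E) (S : Type) (le : S -> S -> Prop) (c : S -> R * R),
    directed_set le -> (forall s, disk (c s)) ->
    forall (x0 : hh_point S) (f : hh_point S -> B),
      hh_carrier c x0 ->
      cont_on (hh_carrier c) (hh_opens le c) setT (topen B) f ->
      f x0 = p e0 ->
      let is_lift (g : hh_point S -> E) :=
        [/\ cont_on (hh_carrier c) (hh_opens le c) setT (topen E) g,
            (forall z, hh_carrier c z -> p (g z) = f z) & g x0 = e0] in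
      (exists g, is_lift g) /\
      (forall g1 g2, is_lift g1 -> is_lift g2 ->
         forall z, hh_carrier c z -> g1 z = g2 z).

Definition fiber_idx {E B : Type} (p : E -> B) (b0 : B) := {e : E | p e = b0}.

Definition prod_opens {I : Type} {X : topologicalType} : set (set (I -> X)) :=
  [set W | forall x, W x -> exists (J : set I) (V : I -> set X),
     [/\ finite_set J, (forall i, J i -> open (V i) /\ V i (x i)) &
         [set y | forall i, J i -> V i (y i)] `<=` W]].

Definition fibered_set {I : Type} {E B : Type} (p : E -> B) : set (I -> E) :=
  [set x | forall s t, p (x s) = p (x t)].

Definition pfp_base {E B : Type} (p : E -> B) (b0 : B) : fiber_idx p b0 -> E :=
  fun i => sval i.

Definition pfp_carrier {E B : topologicalType} (p : E -> B) (b0 : B)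
    : set (fiber_idx p b0 -> E) :=
  path_comp setT prod_opens (fibered_set p) (pfp_base p b0).

Definition pfp_opens {E B : topologicalType} (p : E -> B) (b0 : B)
    : set (set (fiber_idx p b0 -> E)) :=
  peanification (pfp_carrier p b0) (subspace_opens (pfp_carrier p b0) prod_opens).

(* the projection, x |-> p_t(x_t), here with t = e0 *)
Definition pfp_proj {E B : Type} (p : E -> B) (e0 : E)
    : (fiber_idx p (p e0) -> E) -> B :=
  fun x => p (x (exist _ e0 erefl)).

Definition regular_covering {T : Type} (A : set T) (tau : set (set T))
    {B : topologicalType} (q : T -> B) : Prop :=
  forall alpha : R -> B,
    cont_on unit_I unit_I_opens setT (topen B) alpha -> alpha 0 = alpha 1 ->
    let is_lift (g : R -> T) :=
      cont_on unit_I unit_I_opens A tau g /\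
      (forall t, unit_I t -> q (g t) = alpha t) in
    (forall g, is_lift g -> g 0 = g 1) \/ (forall g, is_lift g -> g 0 <> g 1).

(* Main.v *)
Require Import Defs.
From mathcomp Require Import all_boot all_order all_algebra.
From mathcomp Require Import all_classical all_reals all_analysis.
From mathcomp Require Import Rstruct Rstruct_topology.
From mathcomp Require Import ring lra.
Import Order.TTheory GRing.Theory Num.Theory.
Import numFieldNormedType.Exports.
Local Open Scope classical_set_scope.
Local Open Scope ring_scope.
Local Open Scope ring_scope.

Lemma c1g (K : realType) : continuous (fun x : (K * K)%type => (x.1 + 1) / 2 : K).
Proof.
move=> x.
have h1 : {for x, continuous (fun x : (K*K)%type => x.1)} by exact: cvg_fst.
have k1 : {for x, continuous (fun _ : (K*K)%type => (1:K))} by exact: cvg_cst.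
have k2 : {for x, continuous (fun _ : (K*K)%type => (2^-1:K))} by exact: cvg_cst.
have h2 := continuousD h1 k1.
exact: (continuousM h2 k2).
Qed.
Lemma c1 : continuous (fun x : (R * R)%type => (x.1 + 1) / 2 : R).
Proof. exact: c1g. Qed.

Lemma c2g (K : realType) : continuous (fun t : K => ((2 * t - 1 : K), (0:K))).
Proof.
move=> t; rewrite /continuous_at.
have k1 : {for t, continuous (fun _ : K => (1:K))} by exact: cvg_cst.
have k2 : {for t, continuous (fun _ : K => (2:K))} by exact: cvg_cst.
have k3 : {for t, continuous (fun x : K => x)} by exact: cvg_id.
have h := continuousM k2 k3.
have h4 := continuousB h k1.
have k0 : {for t, continuous (fun _ : K => (0:K))} by exact: cvg_cst.
exact: (cvg_pair h4 k0).
Qed.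
Lemma c2 : continuous (fun t : R => ((2 * t - 1 : R), (0:R))).
Proof. exact: c2g. Qed.

Lemma c3g (K : realType) : continuous (fun t : K => 1 - t : K).
Proof.
move=> t.
have k1 : {for t, continuous (fun _ : K => (1:K))} by exact: cvg_cst.
have k3 : {for t, continuous (fun x : K => x)} by exact: cvg_id.
exact: (continuousB k1 k3).
Qed.
Lemma c3 : continuous (fun t : R => 1 - t : R).
Proof. exact: c3g. Qed.
Lemma o1 (W : set R) : open W -> open [set x : (R*R)%type | W ((x.1 + 1)/2)].
Proof. move=> oW; exact: (open_comp (f := fun x : (R * R)%type => (x.1 + 1) / 2 : R) (fun x _ => c1 x) oW). Qed.
Lemma o2 (W : set (R*R)%type) : open W -> open [set t : R | W (2 * t - 1, 0)].
Proof. move=> oW; exact: (open_comp (f := fun t : R => ((2 * t - 1 : R), (0:R))) (fun x _ => c2 x) oW). Qed.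
Lemma o3 (W : set R) : open W -> open [set t : R | W (1 - t)].
Proof. move=> oW; exact: (open_comp (f := fun t : R => 1 - t : R) (fun x _ => c3 x) oW). Qed.


Definition hle (s t : unit) : Prop := True.
Definition hc (s : unit) : (R * R)%type := (-1, 0).
Definition hpi (z : hh_point unit) : R :=
  match z with None => 0 | Some (_, x) => (x.1 + 1) / 2 end.
Definition hiota (t : R) : hh_point unit := hh_incl hc tt (2 * t - 1, 0).

Lemma disk_fst (x : (R * R)%type) : disk x -> -1 <= x.1 <= 1.
Proof. rewrite /disk /= => h; apply/andP; split; nra. Qed.

Lemma hpi_incl x : hpi (hh_incl hc tt x) = (x.1 + 1) / 2.
Proof.
rewrite /hh_incl; case: eqP => [->|] //=.
by rewrite addNr mul0r.
Qed.

Lemma incl_carrier x : disk x -> hh_carrier hc (hh_incl hc tt x).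
Proof. rewrite /hh_incl; case: eqP => //= ne dx; by split. Qed.

Lemma hpi_unit z : hh_carrier hc z -> unit_I (hpi z).
Proof.
case: z => [[s x]|] /=; last by rewrite /unit_I /= lexx ler01.
move=> [/disk_fst /andP [h1 h2] _]; rewrite /unit_I /=; apply/andP; split; lra.
Qed.

Lemma hpi_iota t : hpi (hiota t) = t.
Proof. rewrite /hiota hpi_incl /=. by field. Qed.

Lemma iota_disk t : unit_I t -> disk (2 * t - 1, 0).
Proof. rewrite /unit_I /disk /= => /andP [h1 h2]; nra. Qed.

Lemma iota_carrier t : unit_I t -> hh_carrier hc (hiota t).
Proof. by move=> ht; apply: incl_carrier; apply: iota_disk. Qed.

Lemma hiota0 : hiota 0 = None.
Proof.
rewrite /hiota /hh_incl; case: eqP => // ne; exfalso; apply: ne.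
by rewrite /hc mulr0 sub0r.
Qed.

Lemma hdirected : directed_set hle.
Proof. split; [exact: (inhabits tt) | by [] | by [] | by move=> s t; exists tt]. Qed.

Lemma hc_disk s : disk (hc s).
Proof. rewrite /disk /hc /=; lra. Qed.

Lemma cont_comp {T S U : Type} (A : set T) tA (C : set S) tC (D : set U) tD
  (f : T -> S) (g : S -> U) :
  cont_on A tA C tC f -> cont_on C tC D tD g -> cont_on A tA D tD (g \o f).
Proof.
move=> [fm fo] [gm go]; split; first by move=> x /fm /gm.
move=> V /go /fo.
have -> : A `&` f @^-1` (C `&` g @^-1` V) = A `&` (g \o f) @^-1` V.
  apply/seteqP; split => x /=; first by move=> [ax [_ h]].
  by move=> [ax h]; split => //; split => //; apply: fm.
by [].
Qed.
Arguments cont_comp {T S U A tA C tC D tD f g}.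

Lemma cont_p {E B : topologicalType} (p : E -> B) :
  continuous p -> cont_on setT (topen E) setT (topen B) p.
Proof.
move=> pc; split => // V oV; rewrite setTI.
exact: (open_comp (fun x _ => pc x) oV).
Qed.
Arguments cont_p {E B p}.

Lemma cont_hpi : cont_on (hh_carrier hc) (hh_opens hle hc) unit_I unit_I_opens hpi.
Proof.
split; first exact: hpi_unit.
move=> V [W [oW ->]]; split.
- by move=> z [].
- case=> /=; exists [set x : (R * R)%type | W ((x.1 + 1) / 2)]; split; first exact: o1.
  apply/seteqP; split => x /=.
  + by move=> [dx [_ [h _]]]; rewrite hpi_incl in h; split.
  + move=> [h dx]; split => //; split; first exact: incl_carrier.
    rewrite hpi_incl; split => //; rewrite -hpi_incl; apply: hpi_unit.
    exact: incl_carrier.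
- by move=> _; exists tt => s [_ h]; exfalso; apply: h.
Qed.

Lemma cont_iota : cont_on unit_I unit_I_opens (hh_carrier hc) (hh_opens hle hc) hiota.
Proof.
split; first exact: iota_carrier.
move=> U [_ Hs _]; have [V' [oV' eV']] := Hs tt.
exists [set t : R | V' (2 * t - 1, 0)]; split; first exact: o2.
apply/seteqP; split => t /=.
- move=> [ht hU]; split => //.
  have : (disk `&` hh_incl hc tt @^-1` U) (2 * t - 1, 0) by split => //; exact: iota_disk.
  by rewrite eV' => -[].
- move=> [hV ht]; split => //.
  have : (V' `&` disk) (2 * t - 1, 0) by split => //; exact: iota_disk.
  by rewrite -eV' => -[].
Qed.

Lemma unit_rev t : unit_I t -> unit_I (1 - t).
Proof. rewrite /unit_I /= => /andP [h1 h2]; apply/andP; split; lra. Qed.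

Lemma cont_rev : cont_on unit_I unit_I_opens unit_I unit_I_opens (fun t : R => 1 - t).
Proof.
split; first exact: unit_rev.
move=> V [W [oW ->]]; exists [set t : R | W (1 - t)]; split; first exact: o3.
apply/seteqP; split => t /=; first by move=> [ht [hw _]].
by move=> [hw ht]; split => //; split => //; exact: unit_rev.
Qed.

Lemma uniq_lift {E B : topologicalType} (p : E -> B) :
  disk_hedgehog_covering p -> forall a b : R -> E,
  cont_on unit_I unit_I_opens setT (topen E) a ->
  cont_on unit_I unit_I_opens setT (topen E) b ->
  (forall t, unit_I t -> p (a t) = p (b t)) -> a 0 = b 0 ->
  forall t, unit_I t -> a t = b t.
Proof.
move=> [pc H] a b ha hb hab h0 t ht.
have cf : cont_on (hh_carrier hc) (hh_opens hle hc) setT (topen B)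
    ((p \o a) \o hpi).
  exact: (cont_comp cont_hpi (cont_comp ha (cont_p pc))).
have := H (a 0) unit hle hc hdirected hc_disk None ((p \o a) \o hpi) I cf erefl.
move=> /= [_ Hu].
have la : [/\ cont_on (hh_carrier hc) (hh_opens hle hc) [set: E] (topen E) (a \o hpi),
      forall z : hh_point unit, hh_carrier hc z -> p ((a \o hpi) z) = p (a (hpi z))
    & (a \o hpi) None = a 0].
  split => //; exact: (cont_comp cont_hpi ha).
have lb : [/\ cont_on (hh_carrier hc) (hh_opens hle hc) [set: E] (topen E) (b \o hpi),
      forall z : hh_point unit, hh_carrier hc z -> p ((b \o hpi) z) = p (a (hpi z))
    & (b \o hpi) None = a 0].
  split => //; first exact: (cont_comp cont_hpi hb).
  by move=> z hz /=; rewrite hab //; apply: hpi_unit.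
have := Hu _ _ la lb (hiota t) (iota_carrier _ ht).
by rewrite /= hpi_iota.
Qed.

Lemma ex_lift {E B : topologicalType} (p : E -> B) :
  disk_hedgehog_covering p -> forall (beta : R -> B) (e : E),
  cont_on unit_I unit_I_opens setT (topen B) beta -> p e = beta 0 ->
  exists a : R -> E, [/\ cont_on unit_I unit_I_opens setT (topen E) a,
    (forall t, unit_I t -> p (a t) = beta t) & a 0 = e].
Proof.
move=> [pc H] beta e hb he.
have cf : cont_on (hh_carrier hc) (hh_opens hle hc) setT (topen B) (beta \o hpi).
  exact: (cont_comp cont_hpi hb).
have := H e unit hle hc hdirected hc_disk None (beta \o hpi) I cf (esym he).
move=> /= [[G [GC GL G0]] _].
exists (G \o hiota); split.
- exact: (cont_comp cont_iota GC).
- by move=> t ht /=; rewrite GL ?hpi_iota //; exact: iota_carrier.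
- by rewrite /= hiota0.
Qed.

Lemma coord_prod {I : Type} {E : topologicalType} (g : R -> (I -> E)) (i : I) :
  cont_on unit_I unit_I_opens setT prod_opens g ->
  cont_on unit_I unit_I_opens setT (topen E) (fun t => g t i).
Proof.
move=> [_ go]; split => // V oV.
apply: (go [set x : I -> E | V (x i)]).
move=> x hx; exists [set i], (fun _ => V); split.
- exact: finite_set1.
- by move=> j ->.
- by move=> y /=; apply.
Qed.

Lemma peano_coord {I : Type} {E : topologicalType} (A : set (I -> E)) (i : I) (V : set E) :
  open V -> peanification A (subspace_opens A prod_opens) (A `&` [set x | V (x i)]).
Proof.
move=> oV; split; first by move=> x [].
move=> x [ax vx]; exists ([set x | V (x i)] `&` A); split.
- exists [set x | V (x i)]; split => //.
  move=> y hy; exists [set i], (fun _ => V); split.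
  + exact: finite_set1.
  + by move=> j ->.
  + by move=> z /=; apply.
- by [].
- move=> y [g [_ gU _ g1]].
  have := gU 1; rewrite g1 => /(_ _) [].
    by rewrite /unit_I /= ler01 lexx.
  by move=> h1 h2; split.
Qed.

Lemma coord_pfp {I : Type} {E : topologicalType} (A : set (I -> E)) (g : R -> (I -> E)) (i : I) :
  cont_on unit_I unit_I_opens A (peanification A (subspace_opens A prod_opens)) g ->
  cont_on unit_I unit_I_opens setT (topen E) (fun t => g t i).
Proof.
move=> [gm go]; split => // V oV.
have := go _ (@peano_coord _ _ A i V oV).
have -> : unit_I `&` g @^-1` (A `&` [set x | V (x i)]) =
          unit_I `&` (fun t => g t i) @^-1` V.
  apply/seteqP; split => t /=; first by move=> [ht [_ h]].
  by move=> [ht h]; split => //; split => //; apply: gm.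
by [].
Qed.

Arguments uniq_lift {E B p}.
Arguments ex_lift {E B p}.
Arguments coord_prod {I E g}.
Arguments coord_pfp {I E A g}.

Lemma unit0 : unit_I 0. Proof. by rewrite /unit_I /= lexx ler01. Qed.
Lemma unit1 : unit_I 1. Proof. by rewrite /unit_I /= lexx ler01. Qed.

Lemma carrier_fib {E B : topologicalType} {p : E -> B} {b0 x} :
  pfp_carrier p b0 x -> fibered_set p x.
Proof. move=> [g [_ gU _ g1]]; rewrite -g1; exact: gU unit1. Qed.

Lemma key (B E : topologicalType) (p : E -> B) (e0 : E) :
  disk_hedgehog_covering p -> forall (alpha : R -> B)
  (g h : R -> (fiber_idx p (p e0) -> E)),
  cont_on unit_I unit_I_opens (pfp_carrier p (p e0)) (pfp_opens p (p e0)) g ->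
  (forall t, unit_I t -> pfp_proj p e0 (g t) = alpha t) ->
  cont_on unit_I unit_I_opens (pfp_carrier p (p e0)) (pfp_opens p (p e0)) h ->
  (forall t, unit_I t -> pfp_proj p e0 (h t) = alpha t) ->
  g 0 = g 1 -> h 0 = h 1.
Proof.
move=> hp alpha g h gc gl hc' hl g01.
pose i0 : fiber_idx p (p e0) := exist _ e0 erefl.
have gE : forall j t, unit_I t -> p (g t j) = alpha t.
  move=> j t ht; rewrite -(gl t ht) /pfp_proj.
  exact: (carrier_fib (gc.1 t ht) j _).
have hE : forall j t, unit_I t -> p (h t j) = alpha t.
  move=> j t ht; rewrite -(hl t ht) /pfp_proj.
  exact: (carrier_fib (hc'.1 t ht) j _).
apply: funext => e.
have [gam [gamc gamU gam0 gam1]] := gc.1 0 unit0.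
pose betar := fun t : R => p (gam (1 - t) i0).
have betarc : cont_on unit_I unit_I_opens setT (topen B) betar.
  exact: (cont_comp cont_rev (cont_comp (coord_prod i0 gamc) (cont_p hp.1))).
have py : p (h 0 e) = betar 0.
  by rewrite /betar subr0 gam1 (hE _ _ unit0) (gE _ _ unit0).
have [rho [rhoc rhol rho0]] := ex_lift hp _ _ betarc py.
have pe' : p (rho 1) = p e0.
  by rewrite (rhol _ unit1) /betar subrr gam0.
pose e' : fiber_idx p (p e0) := exist _ (rho 1) pe'.
have s1 : (rho \o (fun t => 1 - t)) 1 = gam 1 e'.
  apply: (uniq_lift hp _ _ (cont_comp cont_rev rhoc) (coord_prod e' gamc) _ _ 1 unit1); last first.
    by rewrite /= subr0 gam0.
  move=> t ht /=; rewrite rhol; last exact: unit_rev.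
  rewrite /betar opprB addrC subrK.
  by have := gamU t ht e' i0.
move: s1; rewrite /= subrr rho0 gam1 => s1.
have s2 : g 1 e' = h 1 e.
  apply: (uniq_lift hp _ _ (coord_pfp e' gc) (coord_pfp e hc') _ _ 1 unit1); last first.
    by rewrite -s1.
  by move=> t ht; rewrite gE // hE.
by rewrite -s2 -g01 -s1.
Qed.

Theorem proposition5p8 (B E : topologicalType) (p : E -> B) (e0 : E) :
  path_connected_set setT (topen B) setT ->
  disk_hedgehog_covering p ->
  peano_space E ->
  regular_covering (pfp_carrier p (p e0)) (pfp_opens p (p e0)) (pfp_proj p e0).
Proof.
move=> _ hp _ alpha _ _ /=.
have [H|H] := pselect (forall g : R -> (fiber_idx p (p e0) -> E),
   cont_on unit_I unit_I_opens (pfp_carrier p (p e0)) (pfp_opens p (p e0)) g /\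
   (forall t, unit_I t -> pfp_proj p e0 (g t) = alpha t) -> g 0 = g 1).
  by left.
right => h [hc' hl] h01; apply: H => g [gc gl].
exact: (@key B E p e0 hp alpha h g hc' hl gc gl h01).
Qed.
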